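(* Let the language contain a constant and let $t_1,t_2,\dots$ be a fixed enumeration of all closed terms. Let $E$ be a sentence containing only weak quantifier occurrences. Then $\models_1 E$ iff some expansion $E_n$ of $E$ is valid, i.e. $\models_1 E_n$ (a Herbrand expansion).
   Context: The propositional setting is as follows. - A lattice-oriented signature $\mathcal{L}$ is a finite set of connectives. Each connective $c$ has an arity $n_c$ and a polarity $p_c:\{1,\dots,n_c\}\to\{-,+\}$. It includes binary $\lor,\land,\to$ with $p_\lor\equiv p_\land\equiv +$, $p_\to(1)=-$ and $p_\to(2)=+$. - A finite $\mathcal{L}$-lattice $\mathbf{A}$ is a finite set $L$ with operations $c^L$ such that $(L,\lor^L,\land^L)$ is a lattice with order $\le$ and top $1$. Each $c^L$ is monotone in the arguments with polarity $+$ and antitone in those with polarity $-$. Moreover $1\le a\to b$ iff $a\le b$. The first-order setting is as follows. - Fix a finite $\mathcal{L}$-lattice $\mathbf{A}$ and a predicate language with predicate and function symbols of given arities. - Terms and formulas are built as usual from object variables using the connectives of $\mathcal{L}$ and the quantifiers $\forall,\exists$. - A structure consists of a nonempty set $S$, maps $P^S:S^n\to L$ for the $n$-ary predicate symbols, and maps $f^S:S^n\to S$ for the $n$-ary function symbols. - An evaluation $v$ maps variables to $S$. Formulas get values in $L$: connectives are interpreted by $c^L$; $\|\forall x\varphi\|_v=\bigwedge_{a\in S}\|\varphi\|_{v[x\to a]}$ and $\|\exists x\varphi\|_v=\bigvee_{a\in S}\|\varphi\|_{v[x\to a]}$. - $\models_1 C$ means $\|C\|_v=1$ for every structure and every evaluation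 $v$. - An occurrence in a formula is positive or negative: the whole formula is positive, and going into argument $i$ of a connective $c$ keeps the polarity if $p_c(i)=+$ and flips it if $p_c(i)=-$. Quantifiers do not change polarity. - Weak quantifier occurrences are positive occurrences of $\exists$ and negative occurrences of $\forall$; strong ones are positive $\forall$ and negative $\exists$. - The $n$-th expansion $E_n$ of $E$ is obtained by replacing, from the inside out, every subformula $\exists xA(x)$ by $\bigvee_{i=1}^nA(t_i)$ and every subformula $\forall xA(x)$ by $\bigwedge_{i=1}^nA(t_i)$. *)

(* Defs.v *)
From HB Require Import structures.
From mathcomp Require Import all_boot.
From Stdlib Require Import ClassicalEpsilon.
Set Implicit Arguments. Unset Strict Implicit. Unset Printing Implicit Defensive.

(* Lattice-oriented signature.  The binary connectives \/, /\, -> are   *)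
(* built in (constructors FOr, FAnd, FImp below, with polarities        *)
(* (+,+), (+,+), (-,+)); [xconn] is the finite set of the remaining     *)
(* connectives, each with an arity and a polarity (true = +, false = -).*)
(* Arguments are indexed 0..n-1 instead of 1..n.                        *)
Record signature := Signature {
  xconn : finType;
  xarity : xconn -> nat;
  xpol : forall c : xconn, 'I_(xarity c) -> bool }.

Record Llattice (Sg : signature) := LLattice {
  car : finType;
  le : rel car;
  ljoin : car -> car -> car;
  lmeet : car -> car -> car;
  limp : car -> car -> car;
  ltop : car;
  lxop : forall c : xconn Sg, ('I_(xarity c) -> car) -> car;
  le_refl : forall a, le a a;
  le_trans : forall a b c, le a b -> le b c -> le a c;
  le_anti : forall a b, le a b -> le b a -> a = b;
  ljoin_ubl : forall a b, le a (ljoin a b);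
  ljoin_ubr : forall a b, le b (ljoin a b);
  ljoin_lub : forall a b c, le a c -> le b c -> le (ljoin a b) c;
  lmeet_lbl : forall a b, le (lmeet a b) a;
  lmeet_lbr : forall a b, le (lmeet a b) b;
  lmeet_glb : forall a b c, le c a -> le c b -> le c (lmeet a b);
  ltop_max : forall a, le a ltop;
  limp_mono : forall a a' b b', le a' a -> le b b' -> le (limp a b) (limp a' b');
  limp_top : forall a b, le ltop (limp a b) <-> le a b;
  lxop_mono : forall (c : xconn Sg) (f g : 'I_(xarity c) -> car),
      (forall i, if xpol i then le (f i) (g i) else le (g i) (f i)) ->
      le (lxop f) (lxop g) }.

Arguments le {Sg A} : rename.
Arguments ljoin {Sg A} : rename.
Arguments lmeet {Sg A} : rename.
Arguments limp {Sg A} : rename.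
Arguments ltop {Sg A} : rename.
Arguments lxop {Sg A c} : rename.

Record language := Language {
  psymb : Type; parity : psymb -> nat;
  fsymb : Type; farity : fsymb -> nat }.

Inductive term (La : language) : Type :=
| TVar of nat
| TFun (f : fsymb La) of ('I_(farity f) -> term La).

Inductive formula (Sg : signature) (La : language) : Type :=
| FAtom (P : psymb La) of ('I_(parity P) -> term La)
| FOr of formula Sg La & formula Sg La
| FAnd of formula Sg La & formula Sg La
| FImp of formula Sg La & formula Sg La
| FX (c : xconn Sg) of ('I_(xarity c) -> formula Sg La)
| FAll of nat & formula Sg La
| FEx of nat & formula Sg La.

Arguments TVar {La}.
Arguments TFun {La}.
Arguments FAtom {Sg La}.
Arguments FOr {Sg La}.
Arguments FAnd {Sg La}.
Arguments FImp {Sg La}.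
Arguments FX {Sg La}.
Arguments FAll {Sg La}.
Arguments FEx {Sg La}.

Record structure (Sg : signature) (La : language) (A : Llattice Sg) := Structure {
  dom : Type;
  dom_pt : dom;                      (* the domain is nonempty *)
  pint : forall P : psymb La, ('I_(parity P) -> dom) -> car A;
  fint : forall f : fsymb La, ('I_(farity f) -> dom) -> dom }.

Arguments dom {Sg La A} M : rename.
Arguments dom_pt {Sg La A} M : rename.
Arguments pint {Sg La A} M P _ : rename.
Arguments fint {Sg La A} M f _ : rename.

Definition asbool (P : Prop) : bool :=
  if excluded_middle_informative P then true else false.

(* meet / join of the image of f : D -> L (L finite, so these exist) *)
Definition lbot Sg (A : Llattice Sg) : car A := \big[lmeet/ltop]_(l : car A) l.
Definition inf_img Sg (A : Llattice Sg) (D : Type) (f : D -> car A) : car A :=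
  \big[lmeet/ltop]_(l : car A | asbool (exists d, f d = l)) l.
Definition sup_img Sg (A : Llattice Sg) (D : Type) (f : D -> car A) : car A :=
  \big[ljoin/lbot A]_(l : car A | asbool (exists d, f d = l)) l.

Definition upd (D : Type) (v : nat -> D) (x : nat) (a : D) : nat -> D :=
  fun y => if y == x then a else v y.

Fixpoint teval Sg La (A : Llattice Sg) (M : structure La A) (v : nat -> dom M)
  (t : term La) {struct t} : dom M :=
  match t with
  | TVar x => v x
  | TFun f ts => fint M f (fun i => teval v (ts i))
  end.

Fixpoint feval Sg La (A : Llattice Sg) (M : structure La A) (v : nat -> dom M)
  (phi : formula Sg La) {struct phi} : car A :=
  match phi with
  | FAtom P ts => pint M P (fun i => teval v (ts i))
  | FOr a b => ljoin (feval v a) (feval v b)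
  | FAnd a b => lmeet (feval v a) (feval v b)
  | FImp a b => limp (feval v a) (feval v b)
  | FX c fs => lxop (fun i => feval v (fs i))
  | FAll x a => inf_img (fun d : dom M => feval (upd v x d) a)
  | FEx x a => sup_img (fun d : dom M => feval (upd v x d) a)
  end.

Definition valid1 Sg La (A : Llattice Sg) (phi : formula Sg La) : Prop :=
  forall (M : structure La A) (v : nat -> dom M), feval v phi = ltop.

Fixpoint tfree La (x : nat) (t : term La) : Prop :=
  match t with
  | TVar y => y = x
  | TFun f ts => exists i, tfree x (ts i)
  end.

Fixpoint ffree Sg La (x : nat) (phi : formula Sg La) : Prop :=
  match phi with
  | FAtom P ts => exists i, tfree x (ts i)
  | FOr a b | FAnd a b | FImp a b => ffree x a \/ ffree x b
  | FX c fs => exists i, ffree x (fs i)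
  | FAll y a | FEx y a => y <> x /\ ffree x a
  end.

Definition closed_term La (t : term La) : Prop := forall x, ~ tfree x t.
Definition sentence Sg La (phi : formula Sg La) : Prop := forall x, ~ ffree x phi.

(* Polarity: [only_weak pos phi] says every quantifier occurrence in    *)
(* phi (an occurrence of polarity [pos], true = positive) is weak,      *)
(* i.e. a positive exists or a negative forall.                         *)
Fixpoint only_weak Sg La (pos : bool) (phi : formula Sg La) : Prop :=
  match phi with
  | FAtom _ _ => True
  | FOr a b | FAnd a b => only_weak pos a /\ only_weak pos b
  | FImp a b => only_weak (~~ pos) a /\ only_weak pos b
  | FX c fs => forall i, only_weak (if xpol i then pos else ~~ pos) (fs i)
  | FAll _ a => pos = false /\ only_weak pos a
  | FEx _ a => pos = true /\ only_weak pos a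
  end.

(* Substitution (only used with closed terms s, so no capture) and     *)
(* expansions.                                                          *)
Fixpoint tsubst La (x : nat) (s : term La) (t : term La) : term La :=
  match t with
  | TVar y => if y == x then s else TVar y
  | TFun f ts => TFun f (fun i => tsubst x s (ts i))
  end.

Fixpoint fsubst Sg La (x : nat) (s : term La) (phi : formula Sg La) : formula Sg La :=
  match phi with
  | FAtom P ts => FAtom P (fun i => tsubst x s (ts i))
  | FOr a b => FOr (fsubst x s a) (fsubst x s b)
  | FAnd a b => FAnd (fsubst x s a) (fsubst x s b)
  | FImp a b => FImp (fsubst x s a) (fsubst x s b)
  | FX c fs => FX c (fun i => fsubst x s (fs i))
  | FAll y a => if y == x then FAll y a else FAll y (fsubst x s a)
  | FEx y a => if y == x then FEx y a else FEx y (fsubst x s a)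
  end.

(* bigOr F k = F 0 \/ F 1 \/ ... \/ F k   (k+1 disjuncts), same for bigAnd *)
Fixpoint bigOr Sg La (F : nat -> formula Sg La) (k : nat) : formula Sg La :=
  match k with 0 => F 0 | k'.+1 => FOr (bigOr F k') (F k'.+1) end.
Fixpoint bigAnd Sg La (F : nat -> formula Sg La) (k : nat) : formula Sg La :=
  match k with 0 => F 0 | k'.+1 => FAnd (bigAnd F k') (F k'.+1) end.

(* The n-th expansion E_n (meaningful for n >= 1), with respect to the
   enumeration t_1, t_2, ... given as t 0, t 1, ...: inside out, every
   exists x A(x) becomes A(t_1) \/ ... \/ A(t_n) and every forall x A(x)
   becomes A(t_1) /\ ... /\ A(t_n). *)
Fixpoint expansion Sg La (t : nat -> term La) (n : nat) (phi : formula Sg La)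
  : formula Sg La :=
  match phi with
  | FAtom P ts => FAtom P ts
  | FOr a b => FOr (expansion t n a) (expansion t n b)
  | FAnd a b => FAnd (expansion t n a) (expansion t n b)
  | FImp a b => FImp (expansion t n a) (expansion t n b)
  | FX c fs => FX c (fun i => expansion t n (fs i))
  | FAll x a => bigAnd (fun i => fsubst x (t i) (expansion t n a)) n.-1
  | FEx x a => bigOr (fun i => fsubst x (t i) (expansion t n a)) n.-1
  end.

(* Main.v *)
Require Import Defs.
From HB Require Import structures.
From mathcomp Require Import all_boot.
From Stdlib Require Import ClassicalEpsilon FunctionalExtensionality ProofIrrelevance Classical.
From Stdlib Require List.
Set Implicit Arguments. Unset Strict Implicit. Unset Printing Implicit Defensive.

Section Lat.
Variable Sg : signature.
Variable A : Llattice Sg.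
Implicit Types a b c : car A.

Lemma leT a b c : le a b -> le b c -> le a c. Proof. exact: le_trans. Qed.

Lemma join_mono a a' b b' : le a a' -> le b b' -> le (ljoin a b) (ljoin a' b').
Proof.
move=> h1 h2; apply: ljoin_lub.
  exact: leT h1 (ljoin_ubl _ _).
exact: leT h2 (ljoin_ubr _ _).
Qed.

Lemma meet_mono a a' b b' : le a a' -> le b b' -> le (lmeet a b) (lmeet a' b').
Proof.
move=> h1 h2; apply: lmeet_glb.
  exact: leT (lmeet_lbl _ _) h1.
exact: leT (lmeet_lbr _ _) h2.
Qed.

Lemma big_join_ub (I : eqType) (r : seq I) (P : pred I) (F : I -> car A) idx i :
  i \in r -> P i -> le (F i) (\big[ljoin/idx]_(j <- r | P j) F j).
Proof.
elim: r => [|x r IH] //=; rewrite in_cons big_cons => /orP [/eqP <-|ir] Pi.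
  by rewrite Pi; apply: ljoin_ubl.
case: (P x); last exact: IH.
exact: leT (IH ir Pi) (ljoin_ubr _ _).
Qed.

Lemma big_meet_lb (I : eqType) (r : seq I) (P : pred I) (F : I -> car A) idx i :
  i \in r -> P i -> le (\big[lmeet/idx]_(j <- r | P j) F j) (F i).
Proof.
elim: r => [|x r IH] //=; rewrite in_cons big_cons => /orP [/eqP <-|ir] Pi.
  by rewrite Pi; apply: lmeet_lbl.
case: (P x); last exact: IH.
exact: leT (lmeet_lbr _ _) (IH ir Pi).
Qed.

Lemma lbot_min c : le (lbot A) c.
Proof. rewrite /lbot; apply: (big_meet_lb (fun l => l) _ (i:=c)) => //; exact: mem_index_enum. Qed.

Lemma asboolT (P : Prop) : P -> asbool P.
Proof. by rewrite /asbool; case: excluded_middle_informative. Qed.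
Lemma asboolE (P : Prop) : asbool P -> P.
Proof. by rewrite /asbool; case: excluded_middle_informative. Qed.

Lemma sup_ub (D : Type) (f : D -> car A) d : le (f d) (sup_img f).
Proof.
rewrite /sup_img; apply: (big_join_ub (fun l => l)); first exact: mem_index_enum.
by apply: asboolT; exists d.
Qed.

Lemma sup_lub (D : Type) (f : D -> car A) c : (forall d, le (f d) c) -> le (sup_img f) c.
Proof.
move=> h; rewrite /sup_img; apply: (big_ind (fun x => le x c)).
- exact: lbot_min.
- by move=> x y; apply: ljoin_lub.
- by move=> l /asboolE [d <-].
Qed.

Lemma inf_lb (D : Type) (f : D -> car A) d : le (inf_img f) (f d).
Proof.
rewrite /inf_img; apply: (big_meet_lb (fun l => l)); first exact: mem_index_enum.
by apply: asboolT; exists d.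
Qed.

Lemma inf_glb (D : Type) (f : D -> car A) c : (forall d, le c (f d)) -> le c (inf_img f).
Proof.
move=> h; rewrite /inf_img; apply: (big_ind (fun x => le c x)).
- exact: ltop_max.
- by move=> x y; apply: lmeet_glb.
- by move=> l /asboolE [d <-].
Qed.

End Lat.

Section Sem.
Variable Sg : signature.
Variable A : Llattice Sg.
Variable La : language.
Variable M : structure La A.
Implicit Types (v : nat -> dom M) (phi : formula Sg La).

Lemma bigOr_ub v (F : nat -> formula Sg La) k i :
  i <= k -> le (feval v (F i)) (feval v (bigOr F k)).
Proof.
elim: k => [|k IH] /=; first by rewrite leqn0 => /eqP ->; apply: le_refl.
rewrite leq_eqVlt => /orP [/eqP ->|]; first exact: ljoin_ubr.
by rewrite ltnS => /IH h; apply: leT h (ljoin_ubl _ _).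
Qed.

Lemma bigOr_lub v (F : nat -> formula Sg La) k c :
  (forall i, i <= k -> le (feval v (F i)) c) -> le (feval v (bigOr F k)) c.
Proof.
elim: k => [|k IH] h /=; first exact: h.
apply: ljoin_lub; last exact: h.
by apply: IH => i hi; apply: h; apply: leqW.
Qed.

Lemma bigAnd_lb v (F : nat -> formula Sg La) k i :
  i <= k -> le (feval v (bigAnd F k)) (feval v (F i)).
Proof.
elim: k => [|k IH] /=; first by rewrite leqn0 => /eqP ->; apply: le_refl.
rewrite leq_eqVlt => /orP [/eqP ->|]; first exact: lmeet_lbr.
by rewrite ltnS => /IH h; apply: leT (lmeet_lbl _ _) h.
Qed.

Lemma bigAnd_glb v (F : nat -> formula Sg La) k c :
  (forall i, i <= k -> le c (feval v (F i))) -> le c (feval v (bigAnd F k)).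
Proof.
elim: k => [|k IH] h /=; first exact: h.
apply: lmeet_glb; last exact: h.
by apply: IH => i hi; apply: h; apply: leqW.
Qed.

Lemma teval_ext v v' (u : term La) :
  (forall y, tfree y u -> v y = v' y) -> teval v u = teval v' u.
Proof.
elim: u => [y|f ts IH] /= h; first exact: h.
congr (fint M f); apply: functional_extensionality => i.
by apply: IH => y hy; apply: h; exists i.
Qed.

Lemma teval_closed v v' (s : term La) : closed_term s -> teval v s = teval v' s.
Proof. by move=> cs; apply: teval_ext => y /cs. Qed.

Lemma teval_tsubst v x (s u : term La) :
  teval v (tsubst x s u) = teval (upd v x (teval v s)) u.
Proof.
elim: u => [y|f ts IH] /=.
  by rewrite /upd; case: eqP.
by congr (fint M f); apply: functional_extensionality => i.
Qed.

Lemma upd_same v x d e : upd (upd v x d) x e = upd v x e.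
Proof. by apply: functional_extensionality => y; rewrite /upd; case: eqP. Qed.

Lemma upd_comm v x y d e : y <> x -> upd (upd v x d) y e = upd (upd v y e) x d.
Proof.
move=> nyx; apply: functional_extensionality => z; rewrite /upd.
by case: eqP => [->|]; case: eqP => // -> .
Qed.

Lemma feval_fsubst (phi : formula Sg La) : forall v x (s : term La), closed_term s ->
  feval v (fsubst x s phi) = feval (upd v x (teval v s)) phi.
Proof.
elim: phi => [P ts|a IHa b IHb|a IHa b IHb|a IHa b IHb|c fs IH|y a IH|y a IH] v x s cs /=.
- by congr (pint M P); apply: functional_extensionality => i; rewrite teval_tsubst.
- by rewrite IHa // IHb.
- by rewrite IHa // IHb.
- by rewrite IHa // IHb.
- by congr lxop; apply: functional_extensionality => i; rewrite IH.
- case: (y =P x) => [->|nyx] /=.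
    congr inf_img; apply: functional_extensionality => d.
    by rewrite upd_same.
  congr inf_img; apply: functional_extensionality => d; rewrite IH //.
  by rewrite (teval_closed (upd v y d) v cs) upd_comm //; exact: (nesym nyx).
- case: (y =P x) => [->|nyx] /=.
    congr sup_img; apply: functional_extensionality => d.
    by rewrite upd_same.
  congr sup_img; apply: functional_extensionality => d; rewrite IH //.
  by rewrite (teval_closed (upd v y d) v cs) upd_comm //; exact: (nesym nyx).
Qed.

End Sem.

Definition R Sg (A : Llattice Sg) (p : bool) (a b : car A) := if p then le a b else le b a.

Section Snd.
Variable Sg : signature.
Variable A : Llattice Sg.
Variable La : language.
Variable t : nat -> term La.
Hypothesis Ht_closed : forall i, closed_term (t i).

Lemma R_join p (a a' b b' : car A) : R p a a' -> R p b b' -> R p (ljoin a b) (ljoin a' b').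
Proof. by case: p => /= h1 h2; apply: join_mono. Qed.
Lemma R_meet p (a a' b b' : car A) : R p a a' -> R p b b' -> R p (lmeet a b) (lmeet a' b').
Proof. by case: p => /= h1 h2; apply: meet_mono. Qed.
Lemma R_imp p (a a' b b' : car A) : R (~~ p) a a' -> R p b b' -> R p (limp a b) (limp a' b').
Proof. by case: p => /= h1 h2; apply: limp_mono. Qed.
Lemma R_x p (c : xconn Sg) (f g : 'I_(xarity c) -> car A) :
  (forall i, R (if xpol i then p else ~~ p) (f i) (g i)) -> R p (lxop f) (lxop g).
Proof.
case: p => h /=; apply: lxop_mono => i; have := h i; rewrite /R; by case: (xpol i).
Qed.

Lemma sound (M : structure La A) (phi : formula Sg La) : forall pos, only_weak pos phi ->
  forall (v : nat -> dom M) n, R pos (feval v (expansion t n phi)) (feval v phi).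
Proof.
elim: phi => [P ts|a IHa b IHb|a IHa b IHb|a IHa b IHb|c fs IH|y a IH|y a IH] pos /= hw v n.
- by rewrite /R; case: pos; apply: le_refl.
- by case: hw => h1 h2; apply: R_join; [apply: IHa|apply: IHb].
- by case: hw => h1 h2; apply: R_meet; [apply: IHa|apply: IHb].
- by case: hw => h1 h2; apply: R_imp; [apply: IHa|apply: IHb].
- by apply: R_x => i; apply: IH; apply: hw.
- case: hw => -> hw /=; apply: bigAnd_glb => i _.
  rewrite feval_fsubst //; apply: leT (inf_lb _ _) _.
  exact: (IH false hw).
- case: hw => -> hw /=; apply: bigOr_lub => i _.
  rewrite feval_fsubst //; apply: leT _ (sup_ub _ _).
  exact: (IH true hw).
Qed.

Lemma mono (M : structure La A) (phi : formula Sg La) : forall pos, only_weak pos phi ->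
  forall (v : nat -> dom M) n m, n <= m -> R pos (feval v (expansion t n phi)) (feval v (expansion t m phi)).
Proof.
elim: phi => [P ts|a IHa b IHb|a IHa b IHb|a IHa b IHb|c fs IH|y a IH|y a IH] pos /= hw v n m nm.
- by rewrite /R; case: pos; apply: le_refl.
- by case: hw => h1 h2; apply: R_join; [apply: IHa|apply: IHb].
- by case: hw => h1 h2; apply: R_meet; [apply: IHa|apply: IHb].
- by case: hw => h1 h2; apply: R_imp; [apply: IHa|apply: IHb].
- by apply: R_x => i; apply: (IH i _ (hw i)) => //.
- have nm1 : n.-1 <= m.-1 by rewrite -!subn1 leq_sub2r.
  case: hw => -> hw /=; apply: bigAnd_glb => i hi.
  apply: leT (bigAnd_lb _ _ (leq_trans hi nm1)) _.
  rewrite !feval_fsubst //; exact: (IH false hw).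
- have nm1 : n.-1 <= m.-1 by rewrite -!subn1 leq_sub2r.
  case: hw => -> hw /=; apply: bigOr_lub => i hi.
  apply: leT _ (bigOr_ub _ _ (leq_trans hi nm1)).
  rewrite !feval_fsubst //; exact: (IH true hw).
Qed.

End Snd.

Lemma fin_bound (T : finType) (P : T -> nat -> Prop) :
  (forall l, exists N, forall n, N <= n -> P l n) -> exists N, forall l n, N <= n -> P l n.
Proof.
move=> h.
pose g l := proj1_sig (constructive_indefinite_description _ (h l)).
exists (\max_(l : T) g l) => l n hn.
have := proj2_sig (constructive_indefinite_description _ (h l)); apply.
exact: leq_trans (leq_bigmax (F := g) l) hn.
Qed.

Section Lim.
Variable Sg : signature.
Variable A : Llattice Sg.
Variable La : language.
Variable t : nat -> term La.
Hypothesis Ht_closed : forall i, closed_term (t i).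
Variable M : structure La A.
Hypothesis gen : forall d : dom M, exists i, forall v, teval v (t i) = d.

Lemma lim (phi : formula Sg La) : forall pos, only_weak pos phi ->
  forall (v : nat -> dom M), exists N, forall n, N <= n -> feval v (expansion t n phi) = feval v phi.
Proof.
elim: phi => [P ts|a IHa b IHb|a IHa b IHb|a IHa b IHb|c fs IH|y a IH|y a IH] pos /= hw v.
- by exists 0.
- case: hw => h1 h2; have [Na hNa] := IHa _ h1 v; have [Nb hNb] := IHb _ h2 v.
  exists (maxn Na Nb) => n; rewrite geq_max => /andP [n1 n2].
  by rewrite hNa // hNb.
- case: hw => h1 h2; have [Na hNa] := IHa _ h1 v; have [Nb hNb] := IHb _ h2 v.
  exists (maxn Na Nb) => n; rewrite geq_max => /andP [n1 n2].
  by rewrite hNa // hNb.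
- case: hw => h1 h2; have [Na hNa] := IHa _ h1 v; have [Nb hNb] := IHb _ h2 v.
  exists (maxn Na Nb) => n; rewrite geq_max => /andP [n1 n2].
  by rewrite hNa // hNb.
- have [N hN] := fin_bound (P := fun i n => feval v (expansion t n (fs i)) = feval v (fs i))
     (fun i => IH i _ (hw i) v).
  exists N => n hn; congr lxop; apply: functional_extensionality => i; exact: hN.
- case: hw => hp hw; subst pos.
  pose f := fun d : dom M => feval (upd v y d) a.
  have [N hN] : exists N, forall (l : car A) n, N <= n -> (exists d, f d = l) ->
       le (feval v (bigAnd (fun i => fsubst y (t i) (expansion t n a)) n.-1)) l.
    apply: fin_bound => l; case: (classic (exists d, f d = l)) => [[d fd]|nex]; last first.
      by exists 0 => n _ h; case: (nex h).
    have [i hi] := gen d; have [Nd hNd] := IH false hw (upd v y d).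
    exists (maxn i.+1 Nd) => n; rewrite geq_max => /andP [n1 n2] _.
    rewrite -fd /f -(hNd n n2).
    have -> : d = teval v (t i) by rewrite hi.
    rewrite -feval_fsubst //; apply: bigAnd_lb.
    by rewrite -subn1 leq_subRL ?add1n // (leq_trans _ n1).
  exists N => n hn; apply: le_anti.
    apply: inf_glb => d; exact: (hN (f d) n hn (ex_intro _ d erefl)).
  exact: (@sound _ _ _ _ Ht_closed M (FAll y a) false (conj erefl hw) v n).
- case: hw => hp hw; subst pos.
  pose f := fun d : dom M => feval (upd v y d) a.
  have [N hN] : exists N, forall (l : car A) n, N <= n -> (exists d, f d = l) ->
       le l (feval v (bigOr (fun i => fsubst y (t i) (expansion t n a)) n.-1)).
    apply: fin_bound => l; case: (classic (exists d, f d = l)) => [[d fd]|nex]; last first.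
      by exists 0 => n _ h; case: (nex h).
    have [i hi] := gen d; have [Nd hNd] := IH true hw (upd v y d).
    exists (maxn i.+1 Nd) => n; rewrite geq_max => /andP [n1 n2] _.
    rewrite -fd /f -(hNd n n2).
    have -> : d = teval v (t i) by rewrite hi.
    rewrite -feval_fsubst //; apply: bigOr_ub.
    by rewrite -subn1 leq_subRL ?add1n // (leq_trans _ n1).
  exists N => n hn; apply: le_anti; last first.
    apply: sup_lub => d; exact: (hN (f d) n hn (ex_intro _ d erefl)).
  exact: (@sound _ _ _ _ Ht_closed M (FEx y a) true (conj erefl hw) v n).
Qed.

End Lim.

Definition key (La : language) := {P : psymb La & 'I_(parity P) -> term La}.

Fixpoint qfree Sg La (phi : formula Sg La) : Prop :=
  match phi with
  | FAtom _ _ => True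
  | FOr a b | FAnd a b | FImp a b => qfree a /\ qfree b
  | FX c fs => forall i, qfree (fs i)
  | FAll _ _ | FEx _ _ => False
  end.

Fixpoint atoms Sg La (phi : formula Sg La) : seq (key La) :=
  match phi with
  | FAtom P ts => [:: existT _ P ts]
  | FOr a b | FAnd a b | FImp a b => atoms a ++ atoms b
  | FX c fs => flatten (map (fun i => atoms (fs i)) (enum 'I_(xarity c)))
  | FAll _ _ | FEx _ _ => [::]
  end.

Fixpoint qeval Sg La (A : Llattice Sg) (g : key La -> car A) (phi : formula Sg La) : car A :=
  match phi with
  | FAtom P ts => g (existT _ P ts)
  | FOr a b => ljoin (qeval g a) (qeval g b)
  | FAnd a b => lmeet (qeval g a) (qeval g b)
  | FImp a b => limp (qeval g a) (qeval g b)
  | FX c fs => lxop (fun i => qeval g (fs i))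
  | FAll _ _ | FEx _ _ => ltop
  end.

Definition atomval Sg La (A : Llattice Sg) (M : structure La A) (v : nat -> dom M) (k : key La) : car A :=
  pint M (projT1 k) (fun i => teval v (projT2 k i)).

Lemma feval_qeval Sg La (A : Llattice Sg) (M : structure La A) (v : nat -> dom M) (phi : formula Sg La) :
  qfree phi -> feval v phi = qeval (atomval v) phi.
Proof.
elim: phi => [P ts|a IHa b IHb|a IHa b IHb|a IHa b IHb|c fs IH|y a IH|y a IH] //=.
- by case=> h1 h2; rewrite IHa // IHb.
- by case=> h1 h2; rewrite IHa // IHb.
- by case=> h1 h2; rewrite IHa // IHb.
- by move=> h; congr lxop; apply: functional_extensionality => i; rewrite IH.
Qed.

Lemma In_flatten (I : eqType) (T : Type) (F : I -> seq T) (r : seq I) i k :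
  i \in r -> List.In k (F i) -> List.In k (flatten (map F r)).
Proof.
elim: r => [|x r IH] //=; rewrite in_cons => /orP [/eqP <-|ir] h; apply: List.in_or_app.
  by left.
by right; apply: IH.
Qed.

Lemma qeval_agree Sg La (A : Llattice Sg) (g g' : key La -> car A) (phi : formula Sg La) :
  (forall k, List.In k (atoms phi) -> g k = g' k) -> qeval g phi = qeval g' phi.
Proof.
elim: phi => [P ts|a IHa b IHb|a IHa b IHb|a IHa b IHb|c fs IH|y a IH|y a IH] //= h.
- by apply: h; left.
- by rewrite IHa ?IHb // => k hk; apply: h; apply: List.in_or_app; [right|left].
- by rewrite IHa ?IHb // => k hk; apply: h; apply: List.in_or_app; [right|left].
- by rewrite IHa ?IHb // => k hk; apply: h; apply: List.in_or_app; [right|left].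
- congr lxop; apply: functional_extensionality => i; apply: IH => k hk; apply: h.
  by apply: (In_flatten (i := i)) => //; rewrite mem_enum.
Qed.

Lemma qfree_fsubst Sg La (phi : formula Sg La) x s : qfree phi -> qfree (fsubst x s phi).
Proof.
elim: phi => [P ts|a IHa b IHb|a IHa b IHb|a IHa b IHb|c fs IH|y a IH|y a IH] //=.
- by case=> h1 h2; split; [apply: IHa|apply: IHb].
- by case=> h1 h2; split; [apply: IHa|apply: IHb].
- by case=> h1 h2; split; [apply: IHa|apply: IHb].
- by move=> h i; apply: IH.
Qed.

Lemma qfree_bigOr Sg La (F : nat -> formula Sg La) k : (forall i, qfree (F i)) -> qfree (bigOr F k).
Proof. by move=> h; elim: k => //= k IH. Qed.
Lemma qfree_bigAnd Sg La (F : nat -> formula Sg La) k : (forall i, qfree (F i)) -> qfree (bigAnd F k).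
Proof. by move=> h; elim: k => //= k IH. Qed.

Lemma qfree_exp Sg La (t : nat -> term La) n (phi : formula Sg La) : qfree (expansion t n phi).
Proof.
elim: phi => [P ts|a IHa b IHb|a IHa b IHb|a IHa b IHb|c fs IH|y a IH|y a IH] //=.
- by apply: qfree_bigAnd => i; apply: qfree_fsubst.
- by apply: qfree_bigOr => i; apply: qfree_fsubst.
Qed.

Lemma tfree_tsubst La (u s : term La) x y : closed_term s -> tfree y (tsubst x s u) -> tfree y u /\ y <> x.
Proof.
move=> cs; elim: u => [z|f ts IH] /=.
  case: (z =P x) => [->|nzx]; first by move/cs.
  by move=> /= e; subst; split.
by case=> i /IH [h1 h2]; split => //; exists i.
Qed.

Lemma ffree_fsubst Sg La (phi : formula Sg La) (s : term La) x y :
  closed_term s -> ffree y (fsubst x s phi) -> ffree y phi /\ y <> x.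
Proof.
move=> cs; elim: phi => [P ts|a IHa b IHb|a IHa b IHb|a IHa b IHb|c fs IH|z a IH|z a IH] /=.
- by case=> i /(tfree_tsubst cs) [h1 h2]; split => //; exists i.
- by case=> [/IHa|/IHb] [h1 h2]; split => //; [left|right].
- by case=> [/IHa|/IHb] [h1 h2]; split => //; [left|right].
- by case=> [/IHa|/IHb] [h1 h2]; split => //; [left|right].
- by case=> i /IH [h1 h2]; split => //; exists i.
- case: (z =P x) => [->|nzx] /= [h1 h2]; first by split => // e; apply: h1; rewrite e.
  by case: (IH h2) => h3 h4.
- case: (z =P x) => [->|nzx] /= [h1 h2]; first by split => // e; apply: h1; rewrite e.
  by case: (IH h2) => h3 h4.
Qed.

Lemma ffree_bigOr Sg La (F : nat -> formula Sg La) k y : ffree y (bigOr F k) -> exists i, ffree y (F i).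
Proof. elim: k => [|k IH] /=; first by exists 0. by case=> [/IH|h] //; exists k.+1. Qed.
Lemma ffree_bigAnd Sg La (F : nat -> formula Sg La) k y : ffree y (bigAnd F k) -> exists i, ffree y (F i).
Proof. elim: k => [|k IH] /=; first by exists 0. by case=> [/IH|h] //; exists k.+1. Qed.

Lemma ffree_exp Sg La (t : nat -> term La) (Ht : forall i, closed_term (t i)) n (phi : formula Sg La) y :
  ffree y (expansion t n phi) -> ffree y phi.
Proof.
elim: phi => [P ts|a IHa b IHb|a IHa b IHb|a IHa b IHb|c fs IH|z a IH|z a IH] //=.
- by case=> [/IHa|/IHb]; [left|right].
- by case=> [/IHa|/IHb]; [left|right].
- by case=> [/IHa|/IHb]; [left|right].
- by case=> i /IH h; exists i.
- by case/ffree_bigAnd => i /(ffree_fsubst (Ht i)) [/IH h1 h2]; split => // e; apply: h2.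
- by case/ffree_bigOr => i /(ffree_fsubst (Ht i)) [/IH h1 h2]; split => // e; apply: h2.
Qed.

Lemma In_flatten_inv (I : Type) (T : Type) (F : I -> seq T) (r : seq I) k :
  List.In k (flatten (map F r)) -> exists i, List.In k (F i).
Proof.
elim: r => [|x r IH] //= h.
case: (List.in_app_or _ _ _ h) => [h1|/IH //]; by exists x.
Qed.

Lemma atoms_free Sg La (phi : formula Sg La) y : forall k,
  List.In k (atoms phi) -> (exists i, tfree y (projT2 k i)) -> ffree y phi.
Proof.
elim: phi => [P ts|a IHa b IHb|a IHa b IHb|a IHa b IHb|c fs IH|z a IH|z a IH] //= k.
- by case=> // <- [i h]; exists i.
- by move=> h; case: (List.in_app_or _ _ _ h) => [/IHa|/IHb] h' /h'; [left|right].
- by move=> h; case: (List.in_app_or _ _ _ h) => [/IHa|/IHb] h' /h'; [left|right].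
- by move=> h; case: (List.in_app_or _ _ _ h) => [/IHa|/IHb] h' /h'; [left|right].
- by move=> h; case: (In_flatten_inv h) => i /IH h' /h'; exists i.
Qed.

Definition inf (I : nat -> Prop) := forall N, exists m, N <= m /\ I m.

Lemma ph1 (T : finType) (f : nat -> T) (I : nat -> Prop) :
  inf I -> exists y, inf (fun m => I m /\ f m = y).
Proof.
move=> hI; apply: NNPP => hn.
have hb : forall y, exists N, forall m, N <= m -> I m -> f m <> y.
  move=> y; apply: NNPP => hy; apply: hn; exists y => N.
  apply: NNPP => hN; apply: hy; exists N => m hm Im fy; apply: hN; by exists m.
pose g y := proj1_sig (constructive_indefinite_description _ (hb y)).
have [m [hm Im]] := hI (\max_(y : T) g y).
have := proj2_sig (constructive_indefinite_description _ (hb (f m))) m; apply => //.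
exact: leq_trans (leq_bigmax (F := g) (f m)) hm.
Qed.

Section Kon.
Variable X : Type.
Variable L : finType.
Variable w : nat -> X -> L.
Variable K : nat -> seq X.

Lemma phl (k : seq X) (I : nat -> Prop) :
  inf I -> exists p, inf (fun m => I m /\ map (w m) k = p).
Proof.
elim: k I => [|x k IH] I hI /=; first by exists [::] => N; have [m [h1 h2]] := hI N; exists m.
have [p hp] := IH I hI.
have [y hy] := ph1 (fun m => w m x) hp.
exists (y :: p) => N; have [m [h1 [[h2 h3] h4]]] := hy N.
by exists m; rewrite h3 h4.
Qed.

Definition step (I : nat -> Prop) (k : seq X) : nat -> Prop :=
  match excluded_middle_informative (exists p, inf (fun m => I m /\ map (w m) k = p)) with
  | left h => let p := proj1_sig (constructive_indefinite_description _ h) in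
              fun m => I m /\ map (w m) k = p
  | right _ => I end.

Lemma step_inf I k : inf I -> inf (step I k).
Proof.
move=> hI; rewrite /step; case: excluded_middle_informative => [h|]; last by [].
exact: (proj2_sig (constructive_indefinite_description _ h)).
Qed.

Lemma step_sub I k m : step I k m -> I m.
Proof. by rewrite /step; case: excluded_middle_informative => [h [] |]. Qed.

Lemma step_agree I k m m' : inf I -> step I k m -> step I k m' -> map (w m) k = map (w m') k.
Proof.
move=> hI; rewrite /step; case: excluded_middle_informative => [h|hn].
  by move=> [_ ->] [_ ->].
by case: hn; apply: phl.
Qed.

Fixpoint Is n : nat -> Prop :=
  match n with 0 => step (fun _ => True) (K 0) | n'.+1 => step (Is n') (K n'.+1) end.

Lemma inf_True : inf (fun _ => True).
Proof. by move=> N; exists N. Qed.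

Lemma Is_inf n : inf (Is n).
Proof. elim: n => [|n IH] /=; apply: step_inf => //; exact: inf_True. Qed.

Lemma Is_sub n n' m : n <= n' -> Is n' m -> Is n m.
Proof.
elim: n' => [|n' IH]; first by rewrite leqn0 => /eqP ->.
rewrite leq_eqVlt => /orP [/eqP -> //|]; rewrite ltnS => h /= /step_sub; exact: IH.
Qed.

Lemma map_agree (f g : X -> L) (k : seq X) x : map f k = map g k -> List.In x k -> f x = g x.
Proof.
elim: k => [|y k IH] //= [e1 e2] [<- //|]; exact: IH.
Qed.

Lemma Is_agree j n m m' x : j <= n -> Is n m -> Is n m' -> List.In x (K j) -> w m x = w m' x.
Proof.
move=> jn h h'; have {}h := Is_sub jn h; have {}h' := Is_sub jn h'.
apply: map_agree; case: j h h' {jn} => [|j] /= h h'.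
  by apply: (step_agree inf_True).
by apply: (step_agree (Is_inf j)).
Qed.

Definition mI n : nat := proj1_sig (constructive_indefinite_description _ (Is_inf n n)).
Lemma mI_ge n : n <= mI n.
Proof. exact: (proj1 (proj2_sig (constructive_indefinite_description _ (Is_inf n n)))). Qed.
Lemma mI_in n : Is n (mI n).
Proof. exact: (proj2 (proj2_sig (constructive_indefinite_description _ (Is_inf n n)))). Qed.

Definition Hval (dflt : L) (x : X) : L :=
  match excluded_middle_informative (exists n, List.In x (K n)) with
  | left h => w (mI (proj1_sig (constructive_indefinite_description _ h))) x
  | right _ => dflt end.

Lemma Hval_agree dflt n x : List.In x (K n) -> Hval dflt x = w (mI n) x.
Proof.
move=> hx; rewrite /Hval; case: excluded_middle_informative => [h|hn]; last first.
  by case: hn; exists n.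
set n' := proj1_sig _.
have hx' : List.In x (K n') := proj2_sig (constructive_indefinite_description _ h).
pose N := maxn n n'.
have -> : w (mI n') x = w (mI N) x.
  eapply (Is_agree (j := n') (n := n')); [done|exact: mI_in| |done].
  by apply: (Is_sub (n' := N)); [rewrite leq_maxr| exact: mI_in].
symmetry; eapply (Is_agree (j := n) (n := n)); [done|exact: mI_in| |done].
by apply: (Is_sub (n' := N)); [rewrite leq_maxl| exact: mI_in].
Qed.

End Kon.

Section Herb.
Variable Sg : signature.
Variable A : Llattice Sg.
Variable La : language.
Variable t : nat -> term La.
Hypothesis Hconst : exists f : fsymb La, farity f = 0.
Hypothesis Ht_closed : forall i, closed_term (t i).
Hypothesis Ht_onto : forall s : term La, closed_term s -> exists i, t i = s.

Definition HD := {s : term La | closed_term s}.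

Lemma closed_TFun (f : fsymb La) (ts : 'I_(farity f) -> term La) :
  (forall i, closed_term (ts i)) -> closed_term (TFun f ts).
Proof. by move=> h x [i hi]; apply: (h i x). Qed.

Definition cf := proj1_sig (constructive_indefinite_description _ Hconst).
Lemma cf0 : farity cf = 0.
Proof. exact: (proj2_sig (constructive_indefinite_description _ Hconst)). Qed.

Lemma closed_c : closed_term (TFun cf (fun _ => TVar 0)).
Proof. move=> x [[i hi] _]; move: hi; by rewrite cf0. Qed.

Definition Hstr (Hv : key La -> car A) : structure La A :=
  @Structure Sg La A HD (exist _ _ closed_c)
    (fun P args => Hv (existT _ P (fun i => proj1_sig (args i))))
    (fun f args => exist _ (TFun f (fun i => proj1_sig (args i)))
                     (closed_TFun (fun i => proj2_sig (args i)))).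

Lemma HD_eq (x y : HD) : proj1_sig x = proj1_sig y -> x = y.
Proof.
case: x => x hx; case: y => y hy /= e; subst y; f_equal; apply: proof_irrelevance.
Qed.

Lemma Hteval Hv (v : nat -> dom (Hstr Hv)) (s : term La) :
  closed_term s -> proj1_sig (teval v s) = s.
Proof.
elim: s => [y|f ts IH] /= cs; first by case: (cs y).
congr TFun; apply: functional_extensionality => i; apply: IH.
by move=> x hx; apply: (cs x); exists i.
Qed.

Lemma Hgen Hv (d : dom (Hstr Hv)) : exists i, forall v, teval v (t i) = d.
Proof.
case: d => s cs; have [i hi] := Ht_onto cs; exists i => v.
by apply: HD_eq; rewrite /= Hteval // hi.
Qed.

Lemma Hatom Hv (v : nat -> dom (Hstr Hv)) (phi : formula Sg La) k :
  sentence phi -> List.In k (atoms phi) -> atomval v k = Hv k.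
Proof.
case: k => P ts sp hk; rewrite /atomval /=; congr Hv; congr existT.
apply: functional_extensionality => i; apply: Hteval => y hy.
by apply: (sp y); apply: (atoms_free hk); exists i.
Qed.

End Herb.

Theorem mainTheorem16 (Sg : signature) (A : Llattice Sg) (La : language)
  (t : nat -> term La)
  (Hconst : exists f : fsymb La, farity f = 0)
  (Ht_closed : forall i, closed_term (t i))
  (Ht_onto : forall s : term La, closed_term s -> exists i, t i = s)
  (E : formula Sg La) (HE : sentence E) (Hweak : only_weak true E) :
  valid1 A E <-> exists n : nat, 0 < n /\ valid1 A (expansion t n E).
Proof.
split; last first.
  case=> n [_ hn] M v; apply: le_anti; first exact: ltop_max.
  rewrite -(hn M v); exact: (sound Ht_closed Hweak v n).
move=> hv; apply: NNPP => hn.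
have cm : forall n, exists Mv : {M : structure La A & nat -> dom M},
    feval (projT2 Mv) (expansion t n.+1 E) <> ltop.
  move=> n; apply: NNPP => h; apply: hn; exists n.+1; split => // M v.
  by apply: NNPP => hne; apply: h; exists (existT _ M v).
pose Mv n := proj1_sig (constructive_indefinite_description _ (cm n)).
pose w n (k : key La) := atomval (projT2 (Mv n)) k.
pose K n := atoms (expansion t n E).
pose Hv := Hval w K ltop.
pose H := @Hstr Sg A La Hconst Hv.
pose v0 : nat -> dom H := fun _ => dom_pt H.
have [N hN] := lim Ht_closed (@Hgen Sg A La t Hconst Ht_closed Ht_onto Hv) Hweak v0.
have e1 : feval v0 (expansion t N E) = ltop by rewrite hN // hv.
have sN : sentence (expansion t N E) by move=> y /(ffree_exp Ht_closed) /HE.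
rewrite feval_qeval ?qfree_exp // in e1.
rewrite (qeval_agree (g' := Hv)) in e1; last by move=> k hk; exact: (Hatom v0 sN hk).
rewrite (qeval_agree (g' := w (mI w K N))) in e1; last by move=> k hk; exact: (Hval_agree w ltop hk).
set m := mI w K N in e1.
have := proj2_sig (constructive_indefinite_description _ (cm m)); apply.
apply: le_anti; first exact: ltop_max.
have hm : N <= m.+1 by apply: leq_trans (mI_ge w K N) (leqnSn _).
have := mono Ht_closed Hweak (projT2 (Mv m)) hm.
rewrite /R => h; apply: leT h. rewrite feval_qeval; last exact: qfree_exp.
rewrite -e1; apply: le_refl.
exact: qfree_exp.
Qed.
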